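(* Let $X$ be a thin combinatorial $2$-complex, let $\mathcal H\le\mathrm{Aut}(X)$, let $Y\subset X$ be an $\mathcal H$-cocompact subcomplex, and let $R$ be a $2$-cell of $X$ that is a missing $3$-shell of $Y$; let $Y'=Y\cup\bigcup_{h\in\mathcal H}hR$. Let $e$ be a $1$-cell of $X$ on $\partial R$, let $e_1,\dots,e_{m_e}$ be all the $1$-cells of the boundary cycle of $R$ that map to $\mathcal H$-translates of $e$, and let $\mathrm{Added}(e)=\mathrm{Sides}_X(Y',e)\setminus\mathrm{Sides}_X(Y,e)$. Then $$|\mathrm{Added}(e)|\ \ge\ \frac{m_e}{|\mathrm{Aut}_{\mathcal H}(R)|}.$$
   Context: $\mathrm{Aut}(X)$ is the group of cellular automorphisms. A side at a $1$-cell $x$ is a pair $(R,r)$ with $R$ a $2$-cell and $r$ a $1$-cell of the boundary cycle $\partial R$ mapping to $x$; $X$ is thin if each $1$-cell has finitely many sides. For a subcomplex $Z$, $\mathrm{Sides}_X(Z,x)$ is the set of sides at $x$ that lift to $Z$, i.e. $x\subset Z$ and $(R,r)\to(X,x)$ factors through $Z$. $Y$ is $\mathcal H$-cocompact if $\mathcal H$-invariant with finitely many $\mathcal H$-orbits of cells. A piece is a nontrivial path factoring through boundary cycles of two $2$-cells in essentially distinct ways (no compatible homeomorphism of the boundary cycles). A missing $3$-shell of $Y$ is a $2$-cell $R$ of $X$ not contained in $Y$ with $\partial R=QS$, $Q$ a path in $Y$, $S$ a concatenation of at most $3$ pieces. $\mathrm{Aut}_{\mathcal H}(R)=\mathrm{Stab}_{\mathcal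 H}(R)/\mathrm{Fix}_{\mathcal H}(R)$, where $\mathrm{Fix}_{\mathcal H}(R)$ is the pointwise stabilizer of $R$ in $\mathcal H$. *)

(* Defs.v *)
From mathcomp Require Import all_boot.
Require Stdlib.Lists.List.

Set Implicit Arguments.
Unset Strict Implicit.
Unset Printing Implicit Defensive.

(* 1-cells are oriented (src, tgt) only for bookkeeping; an oriented step   *)
(* is a pair (e, b) with b = true meaning e is traversed from src to tgt.   *)
(* Each 2-cell R has a boundary cycle of length len R >= 1, whose i-th      *)
(* 1-cell (i < len R) is the oriented step (bde R i, bdo R i).              *)

Record complex := Complex {
  V : Type; E : Type; F : Type;
  src : E -> V; tgt : E -> V;
  len : F -> nat;
  bde : F -> nat -> E;
  bdo : F -> nat -> bool;
  len_pos : forall R, 0 < len R;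
  bd_cycle : forall R i, i < len R ->
    (if bdo R i then tgt (bde R i) else src (bde R i)) =
    (let j := (i.+1 %% len R) in if bdo R j then src (bde R j) else tgt (bde R j))
}.

Arguments src {_} _. Arguments tgt {_} _. Arguments len {_} _.
Arguments bde {_} _ _. Arguments bdo {_} _ _.

Section Cx.
Variable X : complex.

Definition ostep := (E X * bool)%type.
Definition osrc (s : ostep) : V X := if s.2 then src s.1 else tgt s.1.
Definition otgt (s : ostep) : V X := if s.2 then tgt s.1 else src s.1.
Definition orev (s : ostep) : ostep := (s.1, ~~ s.2).
Definition bstep (R : F X) (i : nat) : ostep := (bde R i, bdo R i).

Definition dih (n s : nat) (r : bool) (i : nat) : nat :=
  if r then (s + (n - 1 - i)) %% n else (s + i) %% n.

(* Cellular automorphisms.  An automorphism maps vertices, 1-cells (possibly *)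
(* reversing them: afl) and 2-cells bijectively, and restricts on each      *)
(* closed 2-cell R to a cellular homeomorphism of boundary cycles given by  *)
(* the dihedral map dih (len R) (ash R) (arf R).                            *)
Record aut := Aut {
  aV : V X -> V X;
  aE : E X -> E X;
  afl : E X -> bool;
  aF : F X -> F X;
  ash : F X -> nat;
  arf : F X -> bool;
  aV_bij : bijective aV;
  aE_bij : bijective aE;
  aF_bij : bijective aF;
  aE_src : forall e, src (aE e) = aV (if afl e then tgt e else src e);
  aE_tgt : forall e, tgt (aE e) = aV (if afl e then src e else tgt e);
  aF_len : forall R, len (aF R) = len R;
  aF_bde : forall R i, i < len R ->
     bde (aF R) (dih (len R) (ash R) (arf R) i) = aE (bde R i);
  aF_bdo : forall R i, i < len R ->
     bdo (aF R) (dih (len R) (ash R) (arf R) i)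
       = bdo R i (+) afl (bde R i) (+) arf R
}.

Definition posmap (g : aut) (R : F X) (i : nat) : nat :=
  dih (len R) (ash g R) (arf g R) i.

(* h acts as the composite a o b (b first). *)
Definition comp_as (h a b : aut) : Prop :=
  (forall v, aV h v = aV a (aV b v)) /\
  (forall e, aE h e = aE a (aE b e)) /\
  (forall e, afl h e = afl b e (+) afl a (aE b e)) /\
  (forall R, aF h R = aF a (aF b R)) /\
  (forall R i, i < len R -> posmap h R i = posmap a (aF b R) (posmap b R i)).

Definition is_id (h : aut) : Prop :=
  (forall v, aV h v = v) /\ (forall e, aE h e = e) /\ (forall e, afl h e = false) /\
  (forall R, aF h R = R) /\ (forall R i, i < len R -> posmap h R i = i).

Definition is_subgroup (H : aut -> Prop) : Prop :=
  (exists h, H h /\ is_id h) /\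
  (forall a b, H a -> H b -> exists h, H h /\ comp_as h a b) /\
  (forall a, H a -> exists h, H h /\ forall c, comp_as c h a -> is_id c).

Definition thin : Prop :=
  forall x : E X, exists l : seq (F X * nat),
    forall R i, i < len R -> bde R i = x -> List.In (R, i) l.

Record subcx := Subcx {
  sV : V X -> Prop; sE : E X -> Prop; sF : F X -> Prop;
  sE_src : forall e, sE e -> sV (src e);
  sE_tgt : forall e, sE e -> sV (tgt e);
  sF_bd : forall R i, sF R -> i < len R -> sE (bde R i)
}.

Definition invariant (H : aut -> Prop) (Y : subcx) : Prop :=
  forall h, H h ->
    (forall v, sV Y v -> sV Y (aV h v)) /\
    (forall e, sE Y e -> sE Y (aE h e)) /\
    (forall R, sF Y R -> sF Y (aF h R)).

Definition cocompact (H : aut -> Prop) (Y : subcx) : Prop :=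
  invariant H Y /\
  exists (lv : seq (V X)) (le : seq (E X)) (lf : seq (F X)),
    (forall v, sV Y v -> exists v0, List.In v0 lv /\ exists h, H h /\ aV h v0 = v) /\
    (forall e, sE Y e -> exists e0, List.In e0 le /\ exists h, H h /\ aE h e0 = e) /\
    (forall R, sF Y R -> exists R0, List.In R0 lf /\ exists h, H h /\ aF h R0 = R).

Definition is_path (P : seq ostep) : Prop :=
  forall t a b, List.nth_error P t = Some a -> List.nth_error P t.+1 = Some b ->
    otgt a = osrc b.

(* Position of the t-th step of a lift of a path into the boundary cycle of *)
(* R starting at position j: forward (d = false) reads positions j, j+1, ..; *)
(* backward (d = true) reads positions j, j-1, ... traversing them reversed. *)
Definition lpos (R : F X) (j : nat) (d : bool) (t : nat) : nat :=
  if d then (j + len R * t.+1 - t) %% len R else (j + t) %% len R.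

Definition lstep (R : F X) (j : nat) (d : bool) (t : nat) : ostep :=
  if d then orev (bstep R (lpos R j d t)) else bstep R (lpos R j d t).

(* P factors through the boundary cycle of R via the lift (j, d). *)
Definition lift (P : seq ostep) (R : F X) (j : nat) (d : bool) : Prop :=
  j < len R /\ forall t, t < size P -> List.nth_error P t = Some (lstep R j d t).

(* Two lifts are essentially the same if some (dihedral) homeomorphism of   *)
(* boundary cycles dR1 -> dR2 commutes with the maps to X and carries the   *)
(* first lift of P to the second.                                           *)
Definition same_lift (P : seq ostep) (R1 : F X) (j1 : nat) (d1 : bool)
    (R2 : F X) (j2 : nat) (d2 : bool) : Prop :=
  exists (s : nat) (r : bool),
    len R2 = len R1 /\
    (forall i, i < len R1 ->
       bstep R2 (dih (len R1) s r i) = (if r then orev (bstep R1 i) else bstep R1 i)) /\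
    (forall t, t < size P -> dih (len R1) s r (lpos R1 j1 d1 t) = lpos R2 j2 d2 t) /\
    d2 = d1 (+) r.

Definition piece (P : seq ostep) : Prop :=
  0 < size P /\ is_path P /\
  exists R1 j1 d1 R2 j2 d2,
    lift P R1 j1 d1 /\ lift P R2 j2 d2 /\ ~ same_lift P R1 j1 d1 R2 j2 d2.

Definition bseg (R : F X) (j a l : nat) : seq ostep :=
  map (fun t => bstep R ((j + a + t) %% len R)) (iota 0 l).

(* R is a missing 3-shell of Y: R is not in Y and, reading dR from some     *)
(* position j, dR = Q S with Q (length q) a path in Y and S a concatenation *)
(* of at most 3 pieces (of lengths ls).                                      *)
Definition missing_3shell (Y : subcx) (R : F X) : Prop :=
  ~ sF Y R /\
  exists (j q : nat) (ls : seq nat),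
    j < len R /\ size ls <= 3 /\ q + sumn ls = len R /\
    sV Y (osrc (bstep R j)) /\
    (forall t, t < q -> sE Y (bde R ((j + t) %% len R))) /\
    (forall k, k < size ls -> piece (bseg R j (q + sumn (take k ls)) (nth 0 ls k))).

Definition Yp_F (H : aut -> Prop) (Y : subcx) (R : F X) (f : F X) : Prop :=
  sF Y f \/ exists h, H h /\ f = aF h R.
Definition Yp_E (H : aut -> Prop) (Y : subcx) (R : F X) (x : E X) : Prop :=
  sE Y x \/ exists h i, H h /\ i < len R /\ x = aE h (bde R i).

(* Sides_X(Z, x) for Z given by its 1-cell and 2-cell predicates. *)
Definition side_in (ZE : E X -> Prop) (ZF : F X -> Prop) (x : E X)
    (s : F X * nat) : Prop :=
  s.2 < len s.1 /\ bde s.1 s.2 = x /\ ZE x /\ ZF s.1.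

Definition added (H : aut -> Prop) (Y : subcx) (R : F X) (x : E X)
    (s : F X * nat) : Prop :=
  side_in (Yp_E H Y R) (Yp_F H Y R) x s /\ ~ side_in (sE Y) (sF Y) x s.

Definition stab (g : aut) (R : F X) : Prop := aF g R = R.
Definition fixes (g : aut) (R : F X) : Prop :=
  aF g R = R /\ forall i, i < len R -> posmap g R i = i.

Definition fix_coset (H : aut -> Prop) (R : F X) (g g' : aut) : Prop :=
  exists k, H k /\ fixes k R /\ comp_as g' g k.

(* |Stab_H(R) / Fix_H(R)| = N : a complete irredundant list of coset        *)
(* representatives has length N.                                            *)
Definition autH_card (H : aut -> Prop) (R : F X) (N : nat) : Prop :=
  exists gs : seq aut,
    size gs = N /\
    (forall g, List.In g gs -> H g /\ stab g R) /\
    (forall a b i1 i2, List.nth_error gs i1 = Some a -> List.nth_error gs i2 = Some b ->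
        i1 <> i2 -> ~ fix_coset H R a b) /\
    (forall g, H g -> stab g R -> exists a, List.In a gs /\ fix_coset H R a g).

End Cx.

(* l enumerates P without repetition (so |P| = size l). *)
Definition enumerates {A : Type} (P : A -> Prop) (l : seq A) : Prop :=
  List.NoDup l /\ forall x, List.In x l <-> P x.

(* Main.v *)
Require Import Defs.
From mathcomp Require Import all_boot.
From mathcomp Require Import zify.
From Stdlib Require Import ClassicalEpsilon.
Require Stdlib.Lists.List.

Definition pdec {A} (P : A -> Prop) (x : A) : bool :=
  if excluded_middle_informative (P x) then true else false.

Lemma pdecP {A} (P : A -> Prop) x : pdec P x = true <-> P x.
Proof. rewrite /pdec; case: excluded_middle_informative => //. Qed.

Lemma len_filter2 {A} (p : A -> bool) (s : list A) :
  length (List.filter p s) + length (List.filter (fun x => negb (p x)) s) = length s.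
Proof. elim: s => //= a s IH; case: (p a) => /=; lia. Qed.

Lemma count_fib {A B : Type} (phi : A -> B) N : forall (sl : list B) (ms : list A),
  List.NoDup ms -> (forall x, List.In x ms -> List.In (phi x) sl) ->
  (forall x, List.In x ms -> exists L : list A, (size L <= N)%N /\
      forall y, List.In y ms -> phi y = phi x -> List.In y L) ->
  (size ms <= size sl * N)%N.
Proof.
elim=> [|b sl IH] ms Hnd Hin Hfib.
  case: ms Hnd Hin Hfib => [|x ms] // _ Hin _; by have := Hin x (or_introl erefl).
set p := pdec (fun y => phi y = b).
have Hs : (size (List.filter p ms) + size (List.filter (fun x => negb (p x)) ms) = size ms)%N := len_filter2 p ms.
have H1 : (size (List.filter p ms) <= N)%N.
  case E: (List.filter p ms) => [|x l] //.
  have : List.In x (List.filter p ms) by rewrite E; left.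
  move=> /List.filter_In [xin /pdecP px].
  have [L [HL HLin]] := Hfib x xin.
  apply: leq_trans HL; apply/leP; rewrite -E; apply: List.NoDup_incl_length.
    exact: List.NoDup_filter.
  move=> y /List.filter_In [yin /pdecP py]; apply: HLin => //; by rewrite py px.
have H2 : (size (List.filter (fun x => negb (p x)) ms) <= size sl * N)%N.
  apply: IH; first exact: List.NoDup_filter.
    move=> x /List.filter_In [xin npx]; case: (Hin x xin) => // eb.
    move: npx; have : p x = true by apply/pdecP. by move=> ->.
  move=> x /List.filter_In [xin _]; have [L [HL HLin]] := Hfib x xin.
  exists L; split => // y /List.filter_In [yin _]; exact: HLin.
rewrite /= mulSn -Hs. lia.
Qed.

Lemma dih_inj n s r i j : (i < n)%N -> (j < n)%N -> dih n s r i = dih n s r j -> i = j.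
Proof.
move=> hi hj; rewrite /dih; case: r => /eqP.
  rewrite eqn_modDl modn_small; last lia. rewrite modn_small; last lia.
  move/eqP; lia.
rewrite eqn_modDl !modn_small //; by move/eqP.
Qed.

Lemma dih_lt n s r i : (0 < n)%N -> (dih n s r i < n)%N.
Proof. move=> n0; rewrite /dih; case: r; exact: ltn_pmod. Qed.

Lemma choose_fun {A B : Type} (b0 : B) (P : A -> B -> Prop) :
  exists f : A -> B, forall a, (exists b, P a b) -> P a (f a).
Proof.
exists (fun a => match excluded_middle_informative (exists b, P a b) with
  | left Hx => proj1_sig (constructive_indefinite_description _ Hx)
  | right _ => b0 end).
move=> a Hx; case: excluded_middle_informative => // Hx'.
exact: proj2_sig (constructive_indefinite_description _ Hx').
Qed.

Theorem lemma3p15 (X : complex) (H : aut X -> Prop) (Y : subcx X) (R : F X) (e : E X)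
  (Xthin : thin X) (Hsub : is_subgroup H) (Ycoc : cocompact H Y)
  (Rshell : missing_3shell Y R)
  (eR : exists i, i < len R /\ bde R i = e)
  (N : nat) (HN : autH_card H R N)
  (ms : seq nat)
  (Hms : enumerates (fun i => i < len R /\ exists h, H h /\ bde R i = aE h e) ms) :
  exists sl : seq (F X * nat),
    enumerates (added H Y R e) sl /\ size ms <= size sl * N.
Proof.
case: Hsub => [[id0 [Hid0 Iid0]] [Hcl Hinv]].
case: Iid0 => idV [idE [idfl [idF idpos]]].
have invfacts : forall h hinv, H h -> H hinv -> (forall c, comp_as c hinv h -> is_id c) ->
  (forall x, aE hinv (aE h x) = x) /\ (forall Z, aF hinv (aF h Z) = Z) /\
  (forall Z j, j < len Z -> posmap hinv (aF h Z) (posmap h Z j) = j) /\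
  (forall Z, aF h (aF hinv Z) = Z).
  move=> h hinv Hh Hhi Hc. have [c [Hc' Hcomp]] := Hcl _ _ Hhi Hh.
  have := Hc c Hcomp. case=> cV [cE [cfl [cF cpos]]].
  case: Hcomp => _ [eE [_ [eF epos]]].
  have a2 : forall Z, aF hinv (aF h Z) = Z by move=> Z; rewrite -eF cF.
  split; first by move=> x; rewrite -eE cE.
  split => //; split; first by move=> Z j hj; rewrite -epos // cpos.
  move=> Z; apply: (bij_inj (aF_bij hinv)); by rewrite a2.
have [ch Hch] := choose_fun (id0, id0) (fun i p => H p.1 /\ H p.2 /\ bde R i = aE p.1 e /\
   (forall c, comp_as c p.2 p.1 -> is_id c)).
have Hch' : forall i, List.In i ms -> i < len R /\ H (ch i).1 /\ H (ch i).2 /\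
   bde R i = aE (ch i).1 e /\ (forall c, comp_as c (ch i).2 (ch i).1 -> is_id c).
  move=> i /(proj2 Hms) [hi [h [Hh he]]]; split => //; apply: Hch.
  have [hinv [Hhinv Hc]] := Hinv h Hh; by exists (h, hinv).
pose phi i := (aF (ch i).2 R, posmap (ch i).2 R i).
have lenpos := len_pos R.
have Hadd : forall i, List.In i ms -> added H Y R e (phi i).
  move=> i /Hch' [hi [Hh [Hhi [he Hc]]]].
  have [a1 [a2 [a3 a4]]] := invfacts _ _ Hh Hhi Hc.
  split.
    rewrite /side_in /phi /=; split; first by rewrite aF_len; exact: dih_lt.
    split; first by rewrite /posmap aF_bde // he a1.
    split.
      right; case: eR => i0 [hi0 he0]; exists id0, i0; by rewrite idE.
    by right; exists (ch i).2.
  case=> _ [_ [_ hY]]; apply: (proj1 Rshell).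
  have := (proj1 Ycoc) _ Hh => [[_ [_ iF]]].
  by have := iF _ hY; rewrite a4.
case: (Xthin e) => l Hl.
pose dec := fun x y : F X * nat => excluded_middle_informative (x = y).
pose sl := List.nodup dec (List.filter (pdec (added H Y R e)) l).
have Hsl : forall x, List.In x sl <-> added H Y R e x.
  move=> x; rewrite List.nodup_In List.filter_In; split; first by case=> _ /pdecP.
  move=> Ha; split; last by apply/pdecP.
  case: Ha => [[hlt [hb _]] _]; case: x hlt hb => f p /= hlt hb; exact: Hl.
exists sl; split; first by split => //; exact: List.NoDup_nodup.
case: HN => gs [Hsz [Hgs [_ Hcos]]].
apply: (count_fib phi); first exact: (proj1 Hms).
  by move=> x /Hadd /Hsl.
move=> x xin; exists (map (fun a => posmap a R x) gs); split; first by rewrite size_map Hsz.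
move=> y yin Hxy.
have [hx [Hh [Hhi [he Hc]]]] := Hch' x xin.
have [hy [Hh' [Hhi' [he' Hc']]]] := Hch' y yin.
have [_ [a2' [a3' a4']]] := invfacts _ _ Hh' Hhi' Hc'.
have [g [Hg Hcomp]] := Hcl _ _ Hh' Hhi.
case: Hcomp => _ [_ [_ [gF gpos]]].
move: Hxy; rewrite /phi => -[eF epos].
have stabg : aF g R = R by rewrite gF -eF a4'.
have posg : posmap g R x = y.
  rewrite gpos // -eF -epos.
  apply: (@dih_inj (len R) (ash (ch y).2 R) (arf (ch y).2 R)) => //.
    rewrite /posmap aF_len; apply: dih_lt; exact: len_pos.
  have H1 := a3' (aF (ch y).2 R) (posmap (ch y).2 R y).
  rewrite a4' in H1; apply: H1.
  rewrite aF_len; apply: dih_lt; exact: len_pos.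
have [a [ain [k [Hk [[kF kpos] Hcomp]]]]] := Hcos g Hg stabg.
case: Hcomp => _ [_ [_ [_ cpos]]].
rewrite -posg cpos // kF kpos //.
by elim: (gs) ain => //= b gs' IH [<-|hb]; [left|right; exact: IH].
Qed.
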